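(* Fix $H\in\mathbb{R}$ and consider the framed curvature flow with $\theta$-velocity $$\upsilon_\theta=\kappa H-(\kappa\,\partial_s\psi_3+2\,\partial_s\kappa\,\psi_3)\kappa^{-2}\psi_1+(\kappa^3+\kappa\psi_3^2-\partial_s^2\kappa)\kappa^{-2}\psi_2 .$$ Then the trajectory surface $\Sigma_{\underline t}$ generated by this flow has constant mean curvature equal to $H$.
   Context: $S^1=\mathbb{R}/2\pi\mathbb{Z}$; closed curves $\Gamma_t$ parametrized by $\gamma(t,\cdot):S^1\to\mathbb{R}^3$, $g=\|\partial_u\gamma\|$, $ds=g\,du$, $\partial_s=g^{-1}\partial_u$; Frenet frame $T,N,B$, curvature $\kappa$ (assumed positive where the formulas are used), torsion $\tau$. For an angle function $\theta$: $\nu_\theta=\cos\theta N+\sin\theta B$, $\beta_\theta=T\times\nu_\theta$, $\psi_1=\kappa\cos\theta$, $\psi_2=\kappa\sin\theta$, $\psi_3=\tau+\partial_s\theta$. Framed curvature flow: $\partial_t\gamma=\kappa\nu_\theta$, $\partial_t\theta=\upsilon_\theta$ on $[0,\underline t)\times S^1$. Trajectory surface $\Sigma_{\underline t}=\bigcup_{t\in[0,\underline t)}\Gamma_t$, parametrized by $(u,t)\mapsto\gamma(t,u)$; its mean curvature is $\mathrm{tr}(\mathrm{I\!I}\,\mathrm{I}^{-1})$ (sum of principal curvatures) with respect to the unit normal $\beta_\theta$. *)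

(* Defs.v *)
From Stdlib Require Import Reals List.
From Coquelicot Require Import Coquelicot.
Open Scope R_scope.

Definition V3 : Type := (R * R * R)%type.
Definition mkV (a b c : R) : V3 := (a, b, c).
Definition vx (v : V3) : R := fst (fst v).
Definition vy (v : V3) : R := snd (fst v).
Definition vz (v : V3) : R := snd v.
Definition vadd (v w : V3) : V3 := mkV (vx v + vx w) (vy v + vy w) (vz v + vz w).
Definition vscal (a : R) (v : V3) : V3 := mkV (a * vx v) (a * vy v) (a * vz v).
Definition dot (v w : V3) : R := vx v * vx w + vy v * vy w + vz v * vz w.
Definition cross (v w : V3) : V3 :=
  mkV (vy v * vz w - vz v * vy w)
      (vz v * vx w - vx v * vz w)
      (vx v * vy w - vy v * vx w).
Definition vnorm (v : V3) : R := sqrt (dot v v).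

Definition Dv (f : R -> V3) (x : R) : V3 :=
  mkV (Derive (fun y => vx (f y)) x)
      (Derive (fun y => vy (f y)) x)
      (Derive (fun y => vz (f y)) x).

(** iterated partial derivatives: [true] = d/dt, [false] = d/du *)
Fixpoint pd (w : list bool) (f : R -> R -> R) : R -> R -> R :=
  match w with
  | nil => f
  | b :: w' =>
      if b then (fun t u => Derive (fun t' => pd w' f t' u) t)
      else (fun t u => Derive (fun u' => pd w' f t u') u)
  end.

Definition smooth_on (D : R -> R -> Prop) (f : R -> R -> R) : Prop :=
  forall (w : list bool) (t u : R), D t u ->
    ex_derive (fun t' => pd w f t' u) t /\
    ex_derive (fun u' => pd w f t u') u /\
    continuous (fun p : R * R => pd w f (fst p) (snd p)) (t, u).

Definition smoothV_on (D : R -> R -> Prop) (gam : R -> R -> V3) : Prop :=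
  smooth_on D (fun t u => vx (gam t u)) /\
  smooth_on D (fun t u => vy (gam t u)) /\
  smooth_on D (fun t u => vz (gam t u)).

Section Curve.
Variables (gam : R -> R -> V3) (th : R -> R -> R) (t : R).

Definition gmet (u : R) : R := vnorm (Dv (gam t) u).
Definition dsS (F : R -> R) (u : R) : R := / gmet u * Derive F u.
Definition dsV (F : R -> V3) (u : R) : V3 := vscal (/ gmet u) (Dv F u).

Definition Tan (u : R) : V3 := vscal (/ gmet u) (Dv (gam t) u).
Definition kappa (u : R) : R := vnorm (dsV Tan u).
Definition Nor (u : R) : V3 := vscal (/ kappa u) (dsV Tan u).
Definition Bin (u : R) : V3 := cross (Tan u) (Nor u).
(** torsion: d_s N = -kappa T + tau B *)
Definition tors (u : R) : R := dot (dsV Nor u) (Bin u).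

Definition nu (u : R) : V3 :=
  vadd (vscal (cos (th t u)) (Nor u)) (vscal (sin (th t u)) (Bin u)).
Definition beta (u : R) : V3 := cross (Tan u) (nu u).
Definition psi1 (u : R) : R := kappa u * cos (th t u).
Definition psi2 (u : R) : R := kappa u * sin (th t u).
Definition psi3 (u : R) : R := tors u + dsS (th t) u.

Definition upsilon (H : R) (u : R) : R :=
  kappa u * H
  - (kappa u * dsS psi3 u + 2 * dsS kappa u * psi3 u) * / (kappa u ^ 2) * psi1 u
  + (kappa u ^ 3 + kappa u * psi3 u ^ 2 - dsS (dsS kappa) u) * / (kappa u ^ 2) * psi2 u.
End Curve.

(** * Mean curvature of the trajectory surface (u,t) |-> gam t u,
      w.r.t. the unit normal beta_theta: tr(II I^{-1}) = sum of principal
      curvatures = (L G - 2 M F + N E) / (E G - F^2). *)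
Definition mean_curv (gam : R -> R -> V3) (th : R -> R -> R) (t u : R) : R :=
  let Xu := Dv (gam t) u in
  let Xt := Dv (fun t' => gam t' u) t in
  let Xuu := Dv (Dv (gam t)) u in
  let Xut := Dv (fun t' => Dv (gam t') u) t in
  let Xtt := Dv (fun t' => Dv (fun t'' => gam t'' u) t') t in
  let n := beta gam th t u in
  let E := dot Xu Xu in
  let F := dot Xu Xt in
  let G := dot Xt Xt in
  let L := dot Xuu n in
  let M := dot Xut n in
  let N := dot Xtt n in
  (L * G - 2 * M * F + N * E) / (E * G - F ^ 2).

(* Main.v *)
Require Import Defs.
From Stdlib Require Import Reals List Lra.
From Coquelicot Require Import Coquelicot.
Open Scope R_scope.

Lemma V3_ext (a b : V3) : vx a = vx b -> vy a = vy b -> vz a = vz b -> a = b.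
Proof. destruct a as [[a1 a2] a3], b as [[b1 b2] b3]; unfold vx, vy, vz; simpl; intros; subst; reflexivity. Qed.

Ltac vunf := unfold dot, cross, vadd, vscal, mkV, vx, vy, vz in *; simpl in *.

Fixpoint Ck (k : nat) (f : R -> R) : Prop :=
  match k with O => True | S k => (forall x, ex_derive f x) /\ Ck k (Derive f) end.
Definition Sm (f : R -> R) := forall k, Ck k f.

Lemma Ck_ext k : forall f g, (forall x, f x = g x) -> Ck k f -> Ck k g.
Proof.
  induction k; simpl; auto. intros f g E [H1 H2]. split.
  - intro x; apply (ex_derive_ext f); auto.
  - apply (IHk (Derive f)); auto. intro; apply Derive_ext; auto.
Qed.

Lemma Ck_down k : forall f, Ck (S k) f -> Ck k f.
Proof. induction k; simpl; auto. intros f [H1 [H2 H3]]. split; auto. apply IHk; simpl; auto. Qed.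

Lemma Ck_plus k : forall f g, Ck k f -> Ck k g -> Ck k (fun x => f x + g x).
Proof.
  induction k; simpl; auto. intros f g [F1 F2] [G1 G2]. split.
  - intro x; auto_derive; auto.
  - apply (Ck_ext k (fun x => Derive f x + Derive g x)).
    + intro; rewrite Derive_plus; auto.
    + auto.
Qed.

Lemma Ck_const k c : Ck k (fun _ => c).
Proof.
  revert c; induction k; simpl; auto. intro c; split.
  - intro; apply ex_derive_const.
  - apply (Ck_ext k (fun _ => 0)); auto. intro; rewrite Derive_const; auto.
Qed.

Lemma Ck_mult k : forall f g, Ck k f -> Ck k g -> Ck k (fun x => f x * g x).
Proof.
  induction k; simpl; auto. intros f g [F1 F2] [G1 G2]. split.
  - intro x; apply ex_derive_mult; auto.
  - apply (Ck_ext k (fun x => Derive f x * g x + f x * Derive g x)).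
    + intro; rewrite Derive_mult; auto.
    + apply Ck_plus; apply IHk; auto; apply Ck_down; simpl; auto.
Qed.

Lemma Ck_inv k : forall f, (forall x, f x <> 0) -> Ck k f -> Ck k (fun x => / f x).
Proof.
  induction k; simpl; auto. intros f Hf [F1 F2]. split.
  - intro x; apply ex_derive_inv; auto.
  - apply (Ck_ext k (fun x => (-1 * Derive f x) * ((/ f x) * (/ f x)))).
    + intro; rewrite Derive_inv; auto. field; auto.
    + apply Ck_mult. apply Ck_mult; auto; apply Ck_const.
      assert (Ck k (fun x => / f x)) by (apply IHk; auto; apply Ck_down; simpl; auto).
      apply Ck_mult; auto.
Qed.

Lemma Ck_sqrt k : forall f, (forall x, 0 < f x) -> Ck k f -> Ck k (fun x => sqrt (f x)).
Proof.
  induction k; simpl; auto. intros f Hf [F1 F2]. split.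
  - intro x. eexists. apply is_derive_sqrt; auto. apply Derive_correct; auto.
  - apply (Ck_ext k (fun x => Derive f x * (/2 * / sqrt (f x)))).
    + intro x. erewrite (is_derive_unique (fun x => sqrt (f x))). 2: auto_derive; auto.
      change (fun x0 => f x0) with f.
      field. apply Rgt_not_eq, sqrt_lt_R0; auto.
    + apply Ck_mult; auto. apply Ck_mult. apply Ck_const.
      apply Ck_inv. intro x; apply Rgt_not_eq, sqrt_lt_R0; auto.
      apply IHk; auto. apply Ck_down; simpl; auto.
Qed.

Lemma Ck_sincos k : forall f, Ck k f -> Ck k (fun x => sin (f x)) /\ Ck k (fun x => cos (f x)).
Proof.
  induction k; simpl; auto. intros f [F1 F2].
  assert (IH := IHk f (Ck_down k f (conj F1 F2))).
  destruct IH as [IS IC]. split; split.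
  - intro x; auto_derive; auto.
  - apply (Ck_ext k (fun x => Derive f x * cos (f x))).
    + intro x. erewrite (is_derive_unique (fun x => sin (f x))). 2: auto_derive; auto. change (fun x0 => f x0) with f. ring.
    + apply Ck_mult; auto.
  - intro x; auto_derive; auto.
  - apply (Ck_ext k (fun x => (-1 * Derive f x) * sin (f x))).
    + intro x. erewrite (is_derive_unique (fun x => cos (f x))). 2: auto_derive; auto. change (fun x0 => f x0) with f. ring.
    + apply Ck_mult; auto. apply Ck_mult; auto. apply Ck_const.
Qed.

Lemma Sm_ex f x : Sm f -> ex_derive f x.
Proof. intro H. destruct (H 1%nat) as [H1 _]. auto. Qed.
Lemma Sm_D f : Sm f -> Sm (Derive f).
Proof. intros H k. destruct (H (S k)) as [_ H2]. auto. Qed.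
Lemma Sm_ext f g : (forall x, f x = g x) -> Sm f -> Sm g.
Proof. intros E H k. apply (Ck_ext k f); auto. Qed.
Lemma Sm_plus f g : Sm f -> Sm g -> Sm (fun x => f x + g x).
Proof. intros F G k; apply Ck_plus; auto. Qed.
Lemma Sm_mult f g : Sm f -> Sm g -> Sm (fun x => f x * g x).
Proof. intros F G k; apply Ck_mult; auto. Qed.
Lemma Sm_const c : Sm (fun _ => c).
Proof. intro k; apply Ck_const. Qed.
Lemma Sm_inv f : (forall x, f x <> 0) -> Sm f -> Sm (fun x => / f x).
Proof. intros H F k; apply Ck_inv; auto. Qed.
Lemma Sm_sqrt f : (forall x, 0 < f x) -> Sm f -> Sm (fun x => sqrt (f x)).
Proof. intros H F k; apply Ck_sqrt; auto. Qed.
Lemma Sm_sin f : Sm f -> Sm (fun x => sin (f x)).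
Proof. intros F k; apply Ck_sincos; auto. Qed.
Lemma Sm_cos f : Sm f -> Sm (fun x => cos (f x)).
Proof. intros F k; apply Ck_sincos; auto. Qed.
Lemma Sm_minus f g : Sm f -> Sm g -> Sm (fun x => f x - g x).
Proof.
  intros F G. apply (Sm_ext (fun x => f x + (-1) * g x)). intro; ring.
  apply Sm_plus; auto. apply Sm_mult; auto. apply Sm_const.
Qed.

Definition SmV (f : R -> V3) :=
  Sm (fun x => vx (f x)) /\ Sm (fun x => vy (f x)) /\ Sm (fun x => vz (f x)).

Lemma SmV_vadd f g : SmV f -> SmV g -> SmV (fun x => vadd (f x) (g x)).
Proof. intros [F1 [F2 F3]] [G1 [G2 G3]]; repeat split; apply Sm_plus; auto. Qed.
Lemma SmV_vscal a f : Sm a -> SmV f -> SmV (fun x => vscal (a x) (f x)).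
Proof. intros A [F1 [F2 F3]]; repeat split; apply Sm_mult; auto. Qed.
Lemma SmV_cross f g : SmV f -> SmV g -> SmV (fun x => cross (f x) (g x)).
Proof. intros [F1 [F2 F3]] [G1 [G2 G3]]; repeat split; apply Sm_minus; apply Sm_mult; auto. Qed.
Lemma Sm_dot f g : SmV f -> SmV g -> Sm (fun x => dot (f x) (g x)).
Proof. intros [F1 [F2 F3]] [G1 [G2 G3]]; unfold dot; repeat apply Sm_plus; apply Sm_mult; auto. Qed.
Lemma SmV_Dv f : SmV f -> SmV (Dv f).
Proof. intros [F1 [F2 F3]]; repeat split; apply Sm_D; auto. Qed.

Definition exV (f : R -> V3) x :=
  ex_derive (fun y => vx (f y)) x /\ ex_derive (fun y => vy (f y)) x /\ ex_derive (fun y => vz (f y)) x.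
Lemma SmV_exV f x : SmV f -> exV f x.
Proof. intros [F1 [F2 F3]]; repeat split; apply Sm_ex; auto. Qed.


Ltac eta_D := repeat match goal with |- context [Derive (fun x0 => ?f x0)] => change (Derive (fun x0 => f x0)) with (Derive f) end.
Lemma g_ex_plus (a b : R -> R) x : ex_derive a x -> ex_derive b x -> ex_derive (fun y => a y + b y) x.
Proof. intros; auto_derive; tauto. Qed.
Lemma g_ex_mult (a b : R -> R) x : ex_derive a x -> ex_derive b x -> ex_derive (fun y => a y * b y) x.
Proof. intros; auto_derive; tauto. Qed.
Lemma g_ex_cr (a b c d : R -> R) x : ex_derive a x -> ex_derive b x -> ex_derive c x -> ex_derive d x ->
  ex_derive (fun y => a y * b y - c y * d y) x.
Proof. intros; auto_derive; tauto. Qed.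
Lemma g_ex_dot (a1 a2 a3 b1 b2 b3 : R -> R) x : ex_derive a1 x -> ex_derive a2 x -> ex_derive a3 x ->
  ex_derive b1 x -> ex_derive b2 x -> ex_derive b3 x ->
  ex_derive (fun y => a1 y * b1 y + a2 y * b2 y + a3 y * b3 y) x.
Proof. intros; auto_derive; tauto. Qed.
Lemma g_D_plus (a b : R -> R) x : ex_derive a x -> ex_derive b x ->
  Derive (fun y => a y + b y) x = Derive a x + Derive b x.
Proof. intros; apply Derive_plus; auto. Qed.
Lemma g_D_mult (a b : R -> R) x : ex_derive a x -> ex_derive b x ->
  Derive (fun y => a y * b y) x = Derive a x * b x + a x * Derive b x.
Proof. intros; apply Derive_mult; auto. Qed.
Lemma g_D_cr (a b c d : R -> R) x : ex_derive a x -> ex_derive b x -> ex_derive c x -> ex_derive d x ->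
  Derive (fun y => a y * b y - c y * d y) x =
  (Derive a x * b x + a x * Derive b x) - (Derive c x * d x + c x * Derive d x).
Proof. intros; erewrite is_derive_unique; [|auto_derive; tauto]. eta_D; ring. Qed.
Lemma g_D_dot (a1 a2 a3 b1 b2 b3 : R -> R) x : ex_derive a1 x -> ex_derive a2 x -> ex_derive a3 x ->
  ex_derive b1 x -> ex_derive b2 x -> ex_derive b3 x ->
  Derive (fun y => a1 y * b1 y + a2 y * b2 y + a3 y * b3 y) x =
  (Derive a1 x * b1 x + Derive a2 x * b2 x + Derive a3 x * b3 x) +
  (a1 x * Derive b1 x + a2 x * Derive b2 x + a3 x * Derive b3 x).
Proof.
  intros; erewrite is_derive_unique; [|auto_derive; tauto]. eta_D; ring.
Qed.

Lemma exV_vadd f g x : exV f x -> exV g x -> exV (fun y => vadd (f y) (g y)) x.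
Proof. intros [F1 [F2 F3]] [G1 [G2 G3]]; repeat split; apply g_ex_plus; auto. Qed.
Lemma exV_vscal a f x : ex_derive a x -> exV f x -> exV (fun y => vscal (a y) (f y)) x.
Proof. intros A [F1 [F2 F3]]; repeat split; apply g_ex_mult; auto. Qed.
Lemma exV_cross f g x : exV f x -> exV g x -> exV (fun y => cross (f y) (g y)) x.
Proof. intros [F1 [F2 F3]] [G1 [G2 G3]]; repeat split; apply g_ex_cr; auto. Qed.
Lemma ex_derive_dot f g x : exV f x -> exV g x -> ex_derive (fun y => dot (f y) (g y)) x.
Proof. intros [F1 [F2 F3]] [G1 [G2 G3]]; apply g_ex_dot; auto. Qed.

Lemma Dv_vadd f g x : exV f x -> exV g x -> Dv (fun y => vadd (f y) (g y)) x = vadd (Dv f x) (Dv g x).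
Proof.
  intros [F1 [F2 F3]] [G1 [G2 G3]]; apply V3_ext;
  [exact (g_D_plus _ _ x F1 G1) | exact (g_D_plus _ _ x F2 G2) | exact (g_D_plus _ _ x F3 G3)].
Qed.
Lemma Dv_vscal a f x : ex_derive a x -> exV f x ->
  Dv (fun y => vscal (a y) (f y)) x = vadd (vscal (Derive a x) (f x)) (vscal (a x) (Dv f x)).
Proof.
  intros A [F1 [F2 F3]]; apply V3_ext;
  [exact (g_D_mult _ _ x A F1) | exact (g_D_mult _ _ x A F2) | exact (g_D_mult _ _ x A F3)].
Qed.
Lemma Dv_cross f g x : exV f x -> exV g x ->
  Dv (fun y => cross (f y) (g y)) x = vadd (cross (Dv f x) (g x)) (cross (f x) (Dv g x)).
Proof.
  intros [F1 [F2 F3]] [G1 [G2 G3]]; apply V3_ext.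
  - etransitivity. exact (g_D_cr _ _ _ _ x F2 G3 F3 G2). unfold Dv; vunf; ring.
  - etransitivity. exact (g_D_cr _ _ _ _ x F3 G1 F1 G3). unfold Dv; vunf; ring.
  - etransitivity. exact (g_D_cr _ _ _ _ x F1 G2 F2 G1). unfold Dv; vunf; ring.
Qed.
Lemma Derive_dot f g x : exV f x -> exV g x ->
  Derive (fun y => dot (f y) (g y)) x = dot (Dv f x) (g x) + dot (f x) (Dv g x).
Proof.
  intros [F1 [F2 F3]] [G1 [G2 G3]].
  etransitivity. exact (g_D_dot _ _ _ _ _ _ x F1 F2 F3 G1 G2 G3). unfold Dv; vunf; ring.
Qed.
Lemma Dv_ext_loc f g x : locally x (fun y => f y = g y) -> Dv f x = Dv g x.
Proof.
  intro H. unfold Dv. f_equal; apply Derive_ext_loc;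
  apply (filter_imp (fun y => f y = g y)); auto; intros y E; rewrite E; auto.
Qed.

Lemma dot_comm a b : dot a b = dot b a.
Proof. vunf; ring. Qed.
Lemma dot_addl a b c : dot (vadd a b) c = dot a c + dot b c.
Proof. vunf; ring. Qed.
Lemma dot_addr a b c : dot c (vadd a b) = dot c a + dot c b.
Proof. vunf; ring. Qed.
Lemma dot_scall k a c : dot (vscal k a) c = k * dot a c.
Proof. vunf; ring. Qed.
Lemma dot_scalr k a c : dot c (vscal k a) = k * dot c a.
Proof. vunf; ring. Qed.
Lemma cross_addr a b c : cross c (vadd a b) = vadd (cross c a) (cross c b).
Proof. apply V3_ext; vunf; ring. Qed.
Lemma cross_addl a b c : cross (vadd a b) c = vadd (cross a c) (cross b c).
Proof. apply V3_ext; vunf; ring. Qed.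
Lemma cross_scalr k a c : cross c (vscal k a) = vscal k (cross c a).
Proof. apply V3_ext; vunf; ring. Qed.
Lemma cross_scall k a c : cross (vscal k a) c = vscal k (cross a c).
Proof. apply V3_ext; vunf; ring. Qed.
Lemma cross_self a : cross a a = mkV 0 0 0.
Proof. apply V3_ext; vunf; ring. Qed.
Lemma dot_zero a : dot (mkV 0 0 0) a = 0.
Proof. vunf; ring. Qed.
Lemma dot_cross_l a b : dot (cross a b) a = 0.
Proof. vunf; ring. Qed.
Lemma dot_cross_r a b : dot (cross a b) b = 0.
Proof. vunf; ring. Qed.
Lemma triple a x b : dot (cross a x) b = - dot x (cross a b).
Proof. vunf; ring. Qed.
Lemma lagrange a b c d : dot (cross a b) (cross c d) = dot a c * dot b d - dot a d * dot b c.
Proof. vunf; ring. Qed.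
Lemma cross_cross a b c : cross a (cross b c) = vadd (vscal (dot a c) b) (vscal (- dot a b) c).
Proof. apply V3_ext; vunf; ring. Qed.
Lemma vscal_add_self k1 k2 a : vadd (vscal k1 a) (vscal k2 a) = vscal (k1 + k2) a.
Proof. apply V3_ext; vunf; ring. Qed.

Lemma decomp T N v : dot T T = 1 -> dot N N = 1 -> dot T N = 0 ->
  v = vadd (vadd (vscal (dot v T) T) (vscal (dot v N) N)) (vscal (dot v (cross T N)) (cross T N)).
Proof.
  intros H1 H2 H3.
  assert (E : forall a b w, vscal (dot w (cross a b)) (cross a b) =
    vadd (vscal (dot (cross a b) (cross a b)) w)
      (vadd (vadd (vscal (dot a w * dot a b) b) (vscal (- dot a w * dot b b) a))
            (vadd (vscal (- dot b w * dot a a) b) (vscal (dot b w * dot a b) a)))).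
  { intros; apply V3_ext; vunf; ring. }
  rewrite E, lagrange, H1, H2, H3. try rewrite (dot_comm N T), H3.
  apply V3_ext; vunf; ring.
Qed.

Lemma sqrt_pos_inv x : 0 < sqrt x -> 0 < x.
Proof.
  intro H. destruct (Rle_or_lt x 0) as [h|h]; auto.
  rewrite sqrt_neg_0 in H; auto. lra.
Qed.

Definition Good (gam : R -> R -> V3) (th : R -> R -> R) (t : R) :=
  SmV (gam t) /\ Sm (th t) /\ (forall u, 0 < gmet gam t u) /\ (forall u, 0 < kappa gam t u).


Lemma Sm_gmet gam th t : Good gam th t -> Sm (gmet gam t).
Proof.
  intros [G1 [G2 [G3 G4]]]. unfold gmet, vnorm. apply Sm_sqrt.
  - intro u. apply sqrt_pos_inv. apply G3.
  - apply Sm_dot; apply SmV_Dv; auto.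
Qed.

Lemma SmV_Tan gam th t : Good gam th t -> SmV (Tan gam t).
Proof.
  intros G. pose proof (Sm_gmet _ _ _ G) as Hg. destruct G as [G1 [G2 [G3 G4]]].
  unfold Tan. apply SmV_vscal. apply Sm_inv; auto. intro u; apply Rgt_not_eq, G3.
  apply SmV_Dv; auto.
Qed.

Lemma SmV_dsV gam th t F : Good gam th t -> SmV F -> SmV (dsV gam t F).
Proof.
  intros G HF. pose proof (Sm_gmet _ _ _ G) as Hg. destruct G as [G1 [G2 [G3 G4]]].
  unfold dsV. apply SmV_vscal. apply Sm_inv; auto. intro u; apply Rgt_not_eq, G3.
  apply SmV_Dv; auto.
Qed.

Lemma Sm_dsS gam th t F : Good gam th t -> Sm F -> Sm (dsS gam t F).
Proof.
  intros G HF. pose proof (Sm_gmet _ _ _ G) as Hg. destruct G as [G1 [G2 [G3 G4]]].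
  unfold dsS. apply Sm_mult. apply Sm_inv; auto. intro u; apply Rgt_not_eq, G3.
  apply Sm_D; auto.
Qed.

Lemma Sm_kappa gam th t : Good gam th t -> Sm (kappa gam t).
Proof.
  intros G. pose proof (SmV_dsV _ _ _ _ G (SmV_Tan _ _ _ G)) as H.
  destruct G as [G1 [G2 [G3 G4]]].
  unfold kappa, vnorm. apply Sm_sqrt.
  - intro u. apply sqrt_pos_inv. apply G4.
  - apply Sm_dot; auto.
Qed.

Lemma SmV_Nor gam th t : Good gam th t -> SmV (Nor gam t).
Proof.
  intros G. pose proof (SmV_dsV _ _ _ _ G (SmV_Tan _ _ _ G)) as H.
  pose proof (Sm_kappa _ _ _ G) as Hk.
  destruct G as [G1 [G2 [G3 G4]]].
  unfold Nor. apply SmV_vscal; auto. apply Sm_inv; auto. intro u; apply Rgt_not_eq, G4.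
Qed.

Lemma SmV_Bin gam th t : Good gam th t -> SmV (Bin gam t).
Proof.
  intros G. unfold Bin. apply SmV_cross. apply (SmV_Tan _ _ _ G). apply (SmV_Nor _ _ _ G).
Qed.

Lemma Sm_tors gam th t : Good gam th t -> Sm (tors gam t).
Proof.
  intros G. unfold tors. apply Sm_dot. apply (SmV_dsV _ _ _ _ G (SmV_Nor _ _ _ G)). apply (SmV_Bin _ _ _ G).
Qed.

Lemma SmV_nu gam th t : Good gam th t -> SmV (nu gam th t).
Proof.
  intros G. pose proof G as [G1 [G2 [G3 G4]]]. unfold nu. apply SmV_vadd; apply SmV_vscal.
  apply Sm_cos; auto. apply (SmV_Nor _ _ _ G). apply Sm_sin; auto. apply (SmV_Bin _ _ _ G).
Qed.

Lemma TT gam th t u : Good gam th t -> dot (Tan gam t u) (Tan gam t u) = 1.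
Proof.
  intros [G1 [G2 [G3 G4]]]. specialize (G3 u).
  unfold Tan. rewrite dot_scall, dot_scalr. unfold gmet, vnorm in *.
  pose proof (sqrt_pos_inv _ G3).
  rewrite <- (sqrt_sqrt (dot (Dv (gam t) u) (Dv (gam t) u))) at 3 by lra.
  field. lra.
Qed.

Lemma DT gam th t u : Good gam th t ->
  Dv (Tan gam t) u = vscal (gmet gam t u * kappa gam t u) (Nor gam t u).
Proof.
  intros [G1 [G2 [G3 G4]]]. specialize (G3 u). specialize (G4 u).
  unfold Nor, dsV. apply V3_ext; vunf; field; lra.
Qed.

Lemma const_dot f h x c : exV f x -> exV h x -> (forall y, dot (f y) (h y) = c) ->
  dot (Dv f x) (h x) + dot (f x) (Dv h x) = 0.
Proof.
  intros F H E. rewrite <- Derive_dot; auto.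
  rewrite (Derive_ext _ (fun _ => c)) by auto. apply Derive_const.
Qed.

Lemma TN gam th t u : Good gam th t -> dot (Tan gam t u) (Nor gam t u) = 0.
Proof.
  intros G. pose proof (const_dot _ _ u 1 (SmV_exV _ u (SmV_Tan _ _ _ G)) (SmV_exV _ u (SmV_Tan _ _ _ G))
    (fun y => TT gam th t y G)) as E.
  rewrite (DT _ _ _ _ G) in E. rewrite dot_scall, dot_scalr in E.
  destruct G as [G1 [G2 [G3 G4]]]. specialize (G3 u). specialize (G4 u).
  rewrite (dot_comm (Nor gam t u)) in E.
  assert (0 < gmet gam t u * kappa gam t u) by (apply Rmult_lt_0_compat; auto).
  nra.
Qed.

Lemma NN gam th t u : Good gam th t -> dot (Nor gam t u) (Nor gam t u) = 1.
Proof.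
  intros [G1 [G2 [G3 G4]]]. specialize (G4 u).
  unfold Nor. rewrite dot_scall, dot_scalr. unfold kappa, vnorm in *.
  pose proof (sqrt_pos_inv _ G4).
  rewrite <- (sqrt_sqrt (dot (dsV gam t (Tan gam t) u) (dsV gam t (Tan gam t) u))) at 3 by lra.
  field. lra.
Qed.

Lemma BB gam th t u : Good gam th t -> dot (Bin gam t u) (Bin gam t u) = 1.
Proof.
  intros G. unfold Bin. rewrite lagrange, (TT _ _ _ _ G), (NN _ _ _ _ G), (dot_comm (Nor gam t u)), (TN _ _ _ _ G). ring.
Qed.
Lemma TB gam t u : dot (Tan gam t u) (Bin gam t u) = 0.
Proof. unfold Bin. rewrite dot_comm. apply dot_cross_l. Qed.
Lemma NB gam t u : dot (Nor gam t u) (Bin gam t u) = 0.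
Proof. unfold Bin. rewrite dot_comm. apply dot_cross_r. Qed.

Lemma dNN gam th t u : Good gam th t -> dot (Dv (Nor gam t) u) (Nor gam t u) = 0.
Proof.
  intros G. pose proof (const_dot _ _ u 1 (SmV_exV _ u (SmV_Nor _ _ _ G)) (SmV_exV _ u (SmV_Nor _ _ _ G))
    (fun y => NN gam th t y G)) as E.
  rewrite (dot_comm (Nor gam t u)) in E. lra.
Qed.
Lemma dNT gam th t u : Good gam th t ->
  dot (Dv (Nor gam t) u) (Tan gam t u) = - (gmet gam t u * kappa gam t u).
Proof.
  intros G. pose proof (const_dot _ _ u 0 (SmV_exV _ u (SmV_Tan _ _ _ G)) (SmV_exV _ u (SmV_Nor _ _ _ G))
    (fun y => TN gam th t y G)) as E.
  rewrite (DT _ _ _ _ G), dot_scall, (NN _ _ _ _ G) in E. rewrite dot_comm. lra.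
Qed.
Lemma dNB gam th t u : Good gam th t ->
  dot (Dv (Nor gam t) u) (Bin gam t u) = gmet gam t u * tors gam t u.
Proof.
  intros [G1 [G2 [G3 G4]]]. specialize (G3 u). unfold tors, dsV. rewrite dot_scall. field. lra.
Qed.

Lemma dB gam th t u : Good gam th t ->
  Dv (Bin gam t) u = vscal (- (gmet gam t u * tors gam t u)) (Nor gam t u).
Proof.
  intros G. unfold Bin at 1.
  rewrite Dv_cross. 2: apply SmV_exV, (SmV_Tan _ _ _ G). 2: apply SmV_exV, (SmV_Nor _ _ _ G).
  rewrite (DT _ _ _ _ G), cross_scall, cross_self.
  set (w := vadd _ _).
  rewrite (decomp (Tan gam t u) (Nor gam t u) w). 2: apply (TT _ _ _ _ G). 2: apply (NN _ _ _ _ G). 2: apply (TN _ _ _ _ G).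
  fold (Bin gam t u).
  assert (E1 : dot w (Tan gam t u) = 0).
  { unfold w. rewrite dot_addl, dot_scall, dot_zero, dot_cross_l. ring. }
  assert (E2 : dot w (Nor gam t u) = - (gmet gam t u * tors gam t u)).
  { unfold w. rewrite dot_addl, dot_scall, dot_zero, triple. fold (Bin gam t u). rewrite (dNB _ _ _ _ G). ring. }
  assert (E3 : dot w (Bin gam t u) = 0).
  { unfold w. rewrite dot_addl, dot_scall, dot_zero. unfold Bin. rewrite lagrange, (TT _ _ _ _ G), (TN _ _ _ _ G).
    rewrite (dNN _ _ _ _ G). ring. }
  rewrite E1, E2, E3.
  apply V3_ext; vunf; ring.
Qed.

Lemma G1T gam th t u : Good gam th t -> Dv (gam t) u = vscal (gmet gam t u) (Tan gam t u).
Proof.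
  intros [G1 [G2 [G3 G4]]]. specialize (G3 u). unfold Tan. apply V3_ext; vunf; field; lra.
Qed.

Lemma G2F gam th t u : Good gam th t ->
  Dv (Dv (gam t)) u = vadd (vscal (Derive (gmet gam t) u) (Tan gam t u))
                           (vscal (gmet gam t u * (gmet gam t u * kappa gam t u)) (Nor gam t u)).
Proof.
  intros G.
  rewrite (Dv_ext_loc _ (fun y => vscal (gmet gam t y) (Tan gam t y))).
  2: { apply filter_forall. intro y. apply (G1T _ _ _ _ G). }
  rewrite Dv_vscal. 2: apply Sm_ex, (Sm_gmet _ _ _ G). 2: apply SmV_exV, (SmV_Tan _ _ _ G).
  rewrite (DT _ _ _ _ G). apply V3_ext; vunf; ring.
Qed.

Lemma G1B gam th t u : Good gam th t -> dot (Dv (gam t) u) (Bin gam t u) = 0.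
Proof. intro G. rewrite (G1T _ _ _ _ G), dot_scall, TB. ring. Qed.
Lemma G2B gam th t u : Good gam th t -> dot (Dv (Dv (gam t)) u) (Bin gam t u) = 0.
Proof. intro G. rewrite (G2F _ _ _ _ G), dot_addl, !dot_scall, TB, NB. ring. Qed.
Lemma G1G1 gam th t u : Good gam th t -> dot (Dv (gam t) u) (Dv (gam t) u) = gmet gam t u ^ 2.
Proof. intro G. rewrite (G1T _ _ _ _ G), dot_scall, dot_scalr, (TT _ _ _ _ G). ring. Qed.
Lemma G1G2 gam th t u : Good gam th t ->
  dot (Dv (gam t) u) (Dv (Dv (gam t)) u) = gmet gam t u * Derive (gmet gam t) u.
Proof.
  intro G. rewrite (G1T _ _ _ _ G), (G2F _ _ _ _ G), dot_scall, dot_addr, !dot_scalr, (TT _ _ _ _ G), (TN _ _ _ _ G). ring.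
Qed.

Lemma beta_eq gam th t u : Good gam th t ->
  beta gam th t u = vadd (vscal (cos (th t u)) (Bin gam t u)) (vscal (- sin (th t u)) (Nor gam t u)).
Proof.
  intro G. unfold beta, nu. rewrite cross_addr, !cross_scalr. fold (Bin gam t u).
  unfold Bin at 2. rewrite cross_cross, (TT _ _ _ _ G), (TN _ _ _ _ G).
  apply V3_ext; vunf; ring.
Qed.

Lemma nuB gam th t u : Good gam th t -> dot (nu gam th t u) (Bin gam t u) = sin (th t u).
Proof. intro G. unfold nu. rewrite dot_addl, !dot_scall, NB, (BB _ _ _ _ G). ring. Qed.
Lemma nuN gam th t u : Good gam th t -> dot (nu gam th t u) (Nor gam t u) = cos (th t u).
Proof. intro G. unfold nu. rewrite dot_addl, !dot_scall, (NN _ _ _ _ G), (dot_comm (Bin _ _ _)), NB. ring. Qed.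
Lemma nuT gam th t u : Good gam th t -> dot (Tan gam t u) (nu gam th t u) = 0.
Proof. intro G. unfold nu. rewrite dot_addr, !dot_scalr, (TN _ _ _ _ G), TB. ring. Qed.
Lemma nunu gam th t u : Good gam th t -> dot (nu gam th t u) (nu gam th t u) = 1.
Proof.
  intro G. unfold nu at 2. rewrite dot_addr, !dot_scalr, (nuN _ _ _ _ G), (nuB _ _ _ _ G).
  rewrite <- (sin2_cos2 (th t u)). unfold Rsqr. ring.
Qed.
Lemma nubeta gam th t u : Good gam th t -> dot (nu gam th t u) (beta gam th t u) = 0.
Proof.
  intro G. rewrite (beta_eq _ _ _ _ G), dot_addr, !dot_scalr, (nuN _ _ _ _ G), (nuB _ _ _ _ G). ring.
Qed.
Lemma Tbeta gam th t u : Good gam th t -> dot (Tan gam t u) (beta gam th t u) = 0.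
Proof.
  intro G. rewrite (beta_eq _ _ _ _ G), dot_addr, !dot_scalr, (TN _ _ _ _ G), TB. ring.
Qed.
Lemma Nbeta gam th t u : Good gam th t -> dot (Nor gam t u) (beta gam th t u) = - sin (th t u).
Proof.
  intro G. rewrite (beta_eq _ _ _ _ G), dot_addr, !dot_scalr, (NN _ _ _ _ G), NB. ring.
Qed.

Lemma Dcos (f : R -> R) x : ex_derive f x -> Derive (fun y => cos (f y)) x = - sin (f x) * Derive f x.
Proof. intro H. erewrite is_derive_unique; [|auto_derive; auto]. eta_D. ring. Qed.
Lemma Dsin (f : R -> R) x : ex_derive f x -> Derive (fun y => sin (f y)) x = cos (f x) * Derive f x.
Proof. intro H. erewrite is_derive_unique; [|auto_derive; auto]. eta_D. ring. Qed.

Lemma Dnu gam th t u : Good gam th t ->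
  Dv (nu gam th t) u =
  vadd (vadd (vscal (- sin (th t u) * Derive (th t) u) (Nor gam t u)) (vscal (cos (th t u)) (Dv (Nor gam t) u)))
       (vadd (vscal (cos (th t u) * Derive (th t) u) (Bin gam t u))
             (vscal (sin (th t u)) (vscal (- (gmet gam t u * tors gam t u)) (Nor gam t u)))).
Proof.
  intro G. pose proof G as [G1 [G2 [G3 G4]]].
  assert (Ht : ex_derive (th t) u) by (apply Sm_ex; auto).
  unfold nu at 1. rewrite Dv_vadd.
  rewrite !Dv_vscal.
  all: try (first [ apply Sm_ex, Sm_cos; auto | apply Sm_ex, Sm_sin; auto
                  | apply SmV_exV, (SmV_Nor _ _ _ G) | apply SmV_exV, (SmV_Bin _ _ _ G)
                  | apply exV_vscal; [apply Sm_ex, Sm_cos; auto | apply SmV_exV, (SmV_Nor _ _ _ G)]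
                  | apply exV_vscal; [apply Sm_ex, Sm_sin; auto | apply SmV_exV, (SmV_Bin _ _ _ G)] ]).
  rewrite (Dcos (th t)), (Dsin (th t)), (dB _ _ _ _ G); auto.
Qed.

Definition Vf gam th t := fun y => vscal (kappa gam t y) (nu gam th t y).

Lemma SmV_Vf gam th t : Good gam th t -> SmV (Vf gam th t).
Proof. intro G. unfold Vf. apply SmV_vscal. apply (Sm_kappa _ _ _ G). apply (SmV_nu _ _ _ G). Qed.

Lemma DVf gam th t u : Good gam th t ->
  Dv (Vf gam th t) u = vadd (vscal (Derive (kappa gam t) u) (nu gam th t u)) (vscal (kappa gam t u) (Dv (nu gam th t) u)).
Proof.
  intro G. unfold Vf. apply Dv_vscal. apply Sm_ex, (Sm_kappa _ _ _ G). apply SmV_exV, (SmV_nu _ _ _ G).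
Qed.

Lemma DV_B gam th t u : Good gam th t ->
  dot (Dv (Vf gam th t) u) (Bin gam t u) =
  Derive (kappa gam t) u * sin (th t u) + kappa gam t u * cos (th t u) * Derive (th t) u
  + kappa gam t u * cos (th t u) * gmet gam t u * tors gam t u.
Proof.
  intro G. rewrite (DVf _ _ _ _ G), (Dnu _ _ _ _ G).
  repeat (rewrite dot_addl || rewrite dot_scall).
  rewrite (nuB _ _ _ _ G), NB, (dNB _ _ _ _ G), (BB _ _ _ _ G). ring.
Qed.

Lemma DV_N gam th t u : Good gam th t ->
  dot (Dv (Vf gam th t) u) (Nor gam t u) =
  Derive (kappa gam t) u * cos (th t u) - kappa gam t u * sin (th t u) * Derive (th t) u
  - kappa gam t u * sin (th t u) * gmet gam t u * tors gam t u.
Proof.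
  intro G. rewrite (DVf _ _ _ _ G), (Dnu _ _ _ _ G).
  repeat (rewrite dot_addl || rewrite dot_scall).
  rewrite (nuN _ _ _ _ G), (NN _ _ _ _ G), (dNN _ _ _ _ G), (dot_comm (Bin _ _ _)), NB. ring.
Qed.

Definition W1 gam th t := fun y =>
  Derive (kappa gam t) y * sin (th t y) + kappa gam t y * cos (th t y) * Derive (th t) y
  + kappa gam t y * cos (th t y) * gmet gam t y * tors gam t y.

Lemma DDV_B gam th t u : Good gam th t ->
  dot (Dv (Dv (Vf gam th t)) u) (Bin gam t u) =
  Derive (W1 gam th t) u + gmet gam t u * tors gam t u * dot (Dv (Vf gam th t) u) (Nor gam t u).
Proof.
  intro G.
  assert (E := Derive_dot (Dv (Vf gam th t)) (Bin gam t) u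
     (SmV_exV _ u (SmV_Dv _ (SmV_Vf _ _ _ G))) (SmV_exV _ u (SmV_Bin _ _ _ G))).
  rewrite (Derive_ext _ (W1 gam th t)) in E by (intro; apply (DV_B _ _ _ _ G)).
  rewrite (dB _ _ _ _ G), dot_scalr in E. lra.
Qed.

Definition slab (tbar : Rbar) := fun (t _ : R) => 0 < t /\ Rbar_lt t tbar.

Lemma slab_loc tbar t0 : 0 < t0 -> Rbar_lt t0 tbar -> locally t0 (fun t => 0 < t /\ Rbar_lt t tbar).
Proof.
  intros H1 H2. apply (locally_interval _ t0 (Finite 0) tbar); simpl; auto.
Qed.

Lemma slab_delta tbar t0 : 0 < t0 -> Rbar_lt t0 tbar ->
  exists d : posreal, forall a, Rabs (a - t0) < d -> 0 < a /\ Rbar_lt a tbar.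
Proof.
  intros H1 H2. destruct (slab_loc tbar t0 H1 H2) as [d Hd]. exists d. intros a Ha. apply Hd. exact Ha.
Qed.

Lemma pd_app w w2 f : pd w (pd w2 f) = pd (w ++ w2) f.
Proof. induction w as [|b w IH]; simpl; auto. rewrite IH. reflexivity. Qed.

Lemma smooth_pd (D : R -> R -> Prop) f w2 : smooth_on D f -> smooth_on D (pd w2 f).
Proof. intros H w t u Hd. rewrite pd_app. apply H; auto. Qed.

Lemma smooth_Ck (D : R -> R -> Prop) f t : (forall u, D t u) -> smooth_on D f ->
  forall k w, Ck k (fun u => pd w f t u).
Proof.
  intros HD H k. induction k; simpl; auto. intro w. split.
  - intro x. apply (H w t x (HD x)).
  - exact (IHk (false :: w)).
Qed.

Lemma smooth_Sm (D : R -> R -> Prop) f t : (forall u, D t u) -> smooth_on D f -> Sm (fun u => f t u).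
Proof. intros HD H k. exact (smooth_Ck D f t HD H k nil). Qed.

Lemma Good_slab tbar gam th t :
  smoothV_on (slab tbar) gam -> smooth_on (slab tbar) th ->
  (forall t u, 0 < t -> Rbar_lt t tbar -> 0 < gmet gam t u) ->
  (forall t u, 0 < t -> Rbar_lt t tbar -> 0 < kappa gam t u) ->
  0 < t -> Rbar_lt t tbar -> Good gam th t.
Proof.
  intros [S1 [S2 S3]] S4 Hg Hk H1 H2. assert (HD : forall u, slab tbar t u) by (intro; split; auto).
  repeat split.
  - exact (smooth_Sm _ _ t HD S1).
  - exact (smooth_Sm _ _ t HD S2).
  - exact (smooth_Sm _ _ t HD S3).
  - exact (smooth_Sm _ _ t HD S4).
  - intro; apply Hg; auto.
  - intro; apply Hk; auto.
Qed.

Lemma schwarz_slab tbar (f : R -> R -> R) t0 u : smooth_on (slab tbar) f -> 0 < t0 -> Rbar_lt t0 tbar ->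
  Derive (fun z => Derive (fun t => f z t) u) t0 = Derive (fun z => Derive (fun t => f t z) t0) u.
Proof.
  intros S H1 H2. destruct (slab_delta tbar t0 H1 H2) as [d Hd].
  apply Schwarz.
  - exists d. intros a b Ha _. assert (Hs : slab tbar a b) by (apply Hd; auto).
    split; [exact (proj1 (S nil a b Hs))|].
    split; [exact (proj1 (proj2 (S nil a b Hs)))|].
    split; [exact (proj1 (S (false :: nil) a b Hs))|].
    exact (proj1 (proj2 (S (true :: nil) a b Hs))).
  - apply continuity_2d_pt_filterlim.
    assert (Hs : slab tbar t0 u) by (split; auto).
    exact (proj2 (proj2 (S (true :: false :: nil) t0 u Hs))).
  - apply continuity_2d_pt_filterlim.
    assert (Hs : slab tbar t0 u) by (split; auto).
    exact (proj2 (proj2 (S (false :: true :: nil) t0 u Hs))).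
Qed.

Lemma mixed1 tbar (f : R -> R -> R) (h : R -> R) t0 u0 :
  smooth_on (slab tbar) f -> 0 < t0 -> Rbar_lt t0 tbar ->
  (forall u, Derive (fun t => f t u) t0 = h u) ->
  Derive (fun t => Derive (fun u => f t u) u0) t0 = Derive h u0.
Proof.
  intros S H1 H2 E. rewrite (schwarz_slab tbar f t0 u0 S H1 H2). apply Derive_ext. auto.
Qed.

Lemma mixed2 tbar (f : R -> R -> R) (h : R -> R) t0 u0 :
  smooth_on (slab tbar) f -> 0 < t0 -> Rbar_lt t0 tbar ->
  (forall u, Derive (fun t => f t u) t0 = h u) ->
  Derive (fun t => Derive (fun u => Derive (fun u' => f t u') u) u0) t0 = Derive (Derive h) u0.
Proof.
  intros S H1 H2 E.
  assert (S1 : smooth_on (slab tbar) (fun t u => Derive (fun u' => f t u') u)).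
  { exact (smooth_pd _ f (false :: nil) S). }
  rewrite (schwarz_slab tbar _ t0 u0 S1 H1 H2). apply Derive_ext. intro z.
  apply mixed1 with tbar; auto.
Qed.

Lemma flow_comp (gam : R -> R -> V3) (Vt : R -> V3) t0 :
  (forall u, Dv (fun t' => gam t' u) t0 = Vt u) ->
  (forall u, Derive (fun t => vx (gam t u)) t0 = vx (Vt u)) /\
  (forall u, Derive (fun t => vy (gam t u)) t0 = vy (Vt u)) /\
  (forall u, Derive (fun t => vz (gam t u)) t0 = vz (Vt u)).
Proof.
  intro H. repeat split; intro u; rewrite <- (H u); reflexivity.
Qed.

Lemma G1dt tbar gam (Vt : R -> V3) t0 u0 :
  smoothV_on (slab tbar) gam -> 0 < t0 -> Rbar_lt t0 tbar ->
  (forall u, Dv (fun t' => gam t' u) t0 = Vt u) ->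
  Dv (fun t => Dv (gam t) u0) t0 = Dv Vt u0.
Proof.
  intros [S1 [S2 S3]] H1 H2 H. destruct (flow_comp _ _ _ H) as [E1 [E2 E3]].
  apply V3_ext.
  - exact (mixed1 tbar _ _ t0 u0 S1 H1 H2 E1).
  - exact (mixed1 tbar _ _ t0 u0 S2 H1 H2 E2).
  - exact (mixed1 tbar _ _ t0 u0 S3 H1 H2 E3).
Qed.

Lemma G2dt tbar gam (Vt : R -> V3) t0 u0 :
  smoothV_on (slab tbar) gam -> 0 < t0 -> Rbar_lt t0 tbar ->
  (forall u, Dv (fun t' => gam t' u) t0 = Vt u) ->
  Dv (fun t => Dv (Dv (gam t)) u0) t0 = Dv (Dv Vt) u0.
Proof.
  intros [S1 [S2 S3]] H1 H2 H. destruct (flow_comp _ _ _ H) as [E1 [E2 E3]].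
  apply V3_ext.
  - exact (mixed2 tbar _ _ t0 u0 S1 H1 H2 E1).
  - exact (mixed2 tbar _ _ t0 u0 S2 H1 H2 E2).
  - exact (mixed2 tbar _ _ t0 u0 S3 H1 H2 E3).
Qed.

Definition Kf (a b : V3) : V3 :=
  vadd (vscal (- dot a b * (/ dot a a * / dot a a)) a) (vscal (/ dot a a) b).

Lemma Kform gam th t u : Good gam th t ->
  dsV gam t (Tan gam t) u = Kf (Dv (gam t) u) (Dv (Dv (gam t)) u).
Proof.
  intro G. pose proof (Sm_gmet _ _ _ G) as Sg. pose proof G as [G1 [G2 [G3 G4]]].
  unfold Kf. rewrite (G1G1 _ _ _ _ G), (G1G2 _ _ _ _ G).
  unfold dsV, Tan at 1.
  rewrite Dv_vscal.
  2: { apply ex_derive_inv. apply Sm_ex; auto. apply Rgt_not_eq, G3. }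
  2: { apply SmV_exV, SmV_Dv; auto. }
  rewrite Derive_inv. 2: apply Sm_ex; auto. 2: apply Rgt_not_eq, G3.
  specialize (G3 u).
  apply V3_ext; vunf; field; lra.
Qed.

Lemma const_dot_loc f h x c : exV f x -> exV h x -> locally x (fun y => dot (f y) (h y) = c) ->
  dot (Dv f x) (h x) + dot (f x) (Dv h x) = 0.
Proof.
  intros F H E. rewrite <- Derive_dot; auto.
  rewrite (Derive_ext_loc _ (fun _ => c)) by auto. apply Derive_const.
Qed.

Lemma g_ex_sqrt (h : R -> R) x : ex_derive h x -> 0 < h x -> ex_derive (fun y => sqrt (h y)) x.
Proof. intros; auto_derive; auto. Qed.
Lemma g_ex_cos (h : R -> R) x : ex_derive h x -> ex_derive (fun y => cos (h y)) x.
Proof. intros; auto_derive; auto. Qed.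
Lemma g_ex_sin (h : R -> R) x : ex_derive h x -> ex_derive (fun y => sin (h y)) x.
Proof. intros; auto_derive; auto. Qed.
Lemma g_ex_opp (h : R -> R) x : ex_derive h x -> ex_derive (fun y => - h y) x.
Proof. intros; auto_derive; auto. Qed.


Definition G1t (gam : R -> R -> V3) (u0 : R) := fun t : R => Dv (gam t) u0.
Definition G2t (gam : R -> R -> V3) (u0 : R) := fun t : R => Dv (Dv (gam t)) u0.
Definition Kt (gam : R -> R -> V3) (u0 : R) := fun t : R => Kf (G1t gam u0 t) (G2t gam u0 t).
Definition kt (gam : R -> R -> V3) (u0 : R) := fun t : R => sqrt (dot (Kt gam u0 t) (Kt gam u0 t)).
Definition Nt (gam : R -> R -> V3) (u0 : R) := fun t : R => vscal (/ kt gam u0 t) (Kt gam u0 t).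
Definition Tt (gam : R -> R -> V3) (u0 : R) := fun t : R => vscal (/ sqrt (dot (G1t gam u0 t) (G1t gam u0 t))) (G1t gam u0 t).
Definition Bt (gam : R -> R -> V3) (u0 : R) := fun t : R => cross (Tt gam u0 t) (Nt gam u0 t).
Definition nut (gam : R -> R -> V3) (th : R -> R -> R) u0 := fun t =>
  vadd (vscal (cos (th t u0)) (Nt gam u0 t)) (vscal (sin (th t u0)) (Bt gam u0 t)).

Lemma kt_eq gam th t u0 : Good gam th t -> kappa gam t u0 = kt gam u0 t.
Proof. intro G. unfold kappa, vnorm, kt, Kt. rewrite (Kform _ _ _ _ G). reflexivity. Qed.
Lemma Nt_eq gam th t u0 : Good gam th t -> Nor gam t u0 = Nt gam u0 t.
Proof. intro G. unfold Nor. rewrite (kt_eq _ _ _ _ G). unfold Nt, Kt. rewrite (Kform _ _ _ _ G). reflexivity. Qed.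
Lemma Tt_eq gam t u0 : Tan gam t u0 = Tt gam u0 t.
Proof. reflexivity. Qed.
Lemma Bt_eq gam th t u0 : Good gam th t -> Bin gam t u0 = Bt gam u0 t.
Proof. intro G. unfold Bin, Bt. rewrite (Nt_eq _ _ _ _ G). reflexivity. Qed.
Lemma nut_eq gam th t u0 : Good gam th t -> nu gam th t u0 = nut gam th u0 t.
Proof. intro G. unfold nu, nut. rewrite (Nt_eq _ _ _ _ G), (Bt_eq _ _ _ _ G). reflexivity. Qed.

Lemma exV_G1 tbar gam t0 u0 : smoothV_on (slab tbar) gam -> 0 < t0 -> Rbar_lt t0 tbar ->
  exV (G1t gam u0) t0.
Proof.
  intros [S1 [S2 S3]] H1 H2. assert (Hs : slab tbar t0 u0) by (split; auto).
  split; [|split].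
  exact (proj1 (S1 (false :: nil) t0 u0 Hs)).
  exact (proj1 (S2 (false :: nil) t0 u0 Hs)).
  exact (proj1 (S3 (false :: nil) t0 u0 Hs)).
Qed.
Lemma exV_G2 tbar gam t0 u0 : smoothV_on (slab tbar) gam -> 0 < t0 -> Rbar_lt t0 tbar ->
  exV (G2t gam u0) t0.
Proof.
  intros [S1 [S2 S3]] H1 H2. assert (Hs : slab tbar t0 u0) by (split; auto).
  split; [|split].
  exact (proj1 (S1 (false :: false :: nil) t0 u0 Hs)).
  exact (proj1 (S2 (false :: false :: nil) t0 u0 Hs)).
  exact (proj1 (S3 (false :: false :: nil) t0 u0 Hs)).
Qed.

Lemma exV_Kt gam th t0 u0 : Good gam th t0 -> exV (G1t gam u0) t0 -> exV (G2t gam u0) t0 ->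
  exV (Kt gam u0) t0.
Proof.
  intros G E1 E2. pose proof G as [G1 [G2 [G3 G4]]].
  assert (P : dot (G1t gam u0 t0) (G1t gam u0 t0) <> 0).
  { unfold G1t. rewrite (G1G1 _ _ _ _ G). specialize (G3 u0). apply Rgt_not_eq. apply pow_lt. auto. }
  assert (I : ex_derive (fun t => / dot (G1t gam u0 t) (G1t gam u0 t)) t0).
  { apply ex_derive_inv; auto. apply ex_derive_dot; auto. }
  unfold Kt, Kf. apply exV_vadd; apply exV_vscal; auto.
  apply g_ex_mult. apply g_ex_opp. apply ex_derive_dot; auto. apply g_ex_mult; auto.
Qed.

Lemma Kt0 gam th t0 u0 : Good gam th t0 ->
  Kt gam u0 t0 = vscal (kappa gam t0 u0) (Nor gam t0 u0).
Proof.
  intro G. pose proof G as [G1 [G2 [G3 G4]]]. specialize (G4 u0).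
  unfold Kt, G1t, G2t. rewrite <- (Kform _ _ _ _ G). unfold Nor. specialize (G3 u0). apply V3_ext; vunf; field; lra.
Qed.

Lemma kt_pos gam th t0 u0 : Good gam th t0 -> 0 < kt gam u0 t0.
Proof. intro G. rewrite <- (kt_eq _ _ _ _ G). destruct G as [_ [_ [_ G4]]]. auto. Qed.

Lemma ex_kt gam th t0 u0 : Good gam th t0 -> exV (Kt gam u0) t0 -> ex_derive (kt gam u0) t0.
Proof.
  intros G E. unfold kt. apply g_ex_sqrt. apply ex_derive_dot; auto.
  apply sqrt_pos_inv. apply (kt_pos _ _ _ _ G).
Qed.

Lemma exV_Nt gam th t0 u0 : Good gam th t0 -> exV (Kt gam u0) t0 -> exV (Nt gam u0) t0.
Proof.
  intros G E. unfold Nt. apply exV_vscal; auto. apply ex_derive_inv. apply (ex_kt _ _ _ _ G E).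
  apply Rgt_not_eq, (kt_pos _ _ _ _ G).
Qed.

Lemma exV_Tt gam th t0 u0 : Good gam th t0 -> exV (G1t gam u0) t0 -> exV (Tt gam u0) t0.
Proof.
  intros G E. pose proof G as [G1 [G2 [G3 G4]]]. specialize (G3 u0). unfold Tt. apply exV_vscal; auto.
  apply ex_derive_inv. apply g_ex_sqrt. apply ex_derive_dot; auto.
  apply sqrt_pos_inv. exact G3. apply Rgt_not_eq. exact G3.
Qed.


Lemma ex_c2 gam th t0 u0 : Good gam th t0 -> exV (G1t gam u0) t0 ->
  ex_derive (fun t => / dot (G1t gam u0 t) (G1t gam u0 t)) t0.
Proof.
  intros G E1. pose proof G as [G1 [G2 [G3 G4]]].
  apply ex_derive_inv. apply ex_derive_dot; auto.
  unfold G1t. rewrite (G1G1 _ _ _ _ G). specialize (G3 u0). apply Rgt_not_eq. apply pow_lt. auto.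
Qed.
Lemma ex_c1 gam th t0 u0 : Good gam th t0 -> exV (G1t gam u0) t0 -> exV (G2t gam u0) t0 ->
  ex_derive (fun t => - dot (G1t gam u0 t) (G2t gam u0 t) *
     (/ dot (G1t gam u0 t) (G1t gam u0 t) * / dot (G1t gam u0 t) (G1t gam u0 t))) t0.
Proof.
  intros G E1 E2. pose proof (ex_c2 _ _ _ _ G E1).
  apply g_ex_mult. apply g_ex_opp. apply ex_derive_dot; auto. apply g_ex_mult; auto.
Qed.

Definition c1f (a b : V3) := - dot a b * (/ dot a a * / dot a a).
Definition c2f (a : V3) := / dot a a.

Lemma Xtt_beta tbar gam th t0 u0 :
  smoothV_on (slab tbar) gam -> smooth_on (slab tbar) th ->
  (forall t u, 0 < t -> Rbar_lt t tbar -> 0 < gmet gam t u) ->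
  (forall t u, 0 < t -> Rbar_lt t tbar -> 0 < kappa gam t u) ->
  (forall t u, 0 < t -> Rbar_lt t tbar ->
     Dv (fun t' => gam t' u) t = vscal (kappa gam t u) (nu gam th t u)) ->
  0 < t0 -> Rbar_lt t0 tbar ->
  dot (Dv (fun t' => Dv (fun t'' => gam t'' u0) t') t0) (beta gam th t0 u0) =
  kappa gam t0 u0 * (Derive (fun t' => th t' u0) t0 +
    / kappa gam t0 u0 * (c1f (Dv (gam t0) u0) (Dv (Dv (gam t0)) u0) * dot (Dv (Vf gam th t0) u0) (Bin gam t0 u0)
                        + c2f (Dv (gam t0) u0) * dot (Dv (Dv (Vf gam th t0)) u0) (Bin gam t0 u0))).
Proof.
  intros S Sth Hg Hk Hf H1 H2.
  assert (Gt : forall t, 0 < t -> Rbar_lt t tbar -> Good gam th t).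
  { intros; apply (Good_slab tbar); auto. }
  pose proof (Gt t0 H1 H2) as G0.
  pose proof (slab_loc tbar t0 H1 H2) as L.
  assert (Eth : ex_derive (fun t => th t u0) t0).
  { exact (proj1 (Sth nil t0 u0 (conj H1 H2))). }
  pose proof (exV_G1 tbar gam t0 u0 S H1 H2) as E1.
  pose proof (exV_G2 tbar gam t0 u0 S H1 H2) as E2.
  pose proof (exV_Kt _ _ _ _ G0 E1 E2) as EK.
  pose proof (exV_Nt _ _ _ _ G0 EK) as EN.
  pose proof (exV_Tt _ _ _ _ G0 E1) as ET.
  assert (EB : exV (Bt gam u0) t0) by (unfold Bt; apply exV_cross; auto).
  assert (Enu : exV (nut gam th u0) t0).
  { unfold nut. apply exV_vadd; apply exV_vscal; auto. apply g_ex_cos; auto. apply g_ex_sin; auto. }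
  pose proof (ex_kt _ _ _ _ G0 EK) as Ek.
  rewrite (Dv_ext_loc _ (fun t => vscal (kt gam u0 t) (nut gam th u0 t))).
  2: { apply (filter_imp (fun t => 0 < t /\ Rbar_lt t tbar)); [|exact L]. intros t [h1 h2]. rewrite Hf by auto.
       rewrite (kt_eq _ _ _ _ (Gt t h1 h2)), (nut_eq _ _ _ _ (Gt t h1 h2)). reflexivity. }
  rewrite Dv_vscal by auto.
  rewrite dot_addl, !dot_scall.
  rewrite <- (nut_eq _ _ _ _ G0), (nubeta _ _ _ _ G0), <- (kt_eq _ _ _ _ G0).
  unfold nut at 1. rewrite Dv_vadd.
  2: apply exV_vscal; [apply g_ex_cos; auto | auto].
  2: apply exV_vscal; [apply g_ex_sin; auto | auto].
  rewrite (Dv_vscal (fun y => cos (th y u0)) (Nt gam u0) t0); [| apply g_ex_cos; auto | auto].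
  rewrite (Dv_vscal (fun y => sin (th y u0)) (Bt gam u0) t0); [| apply g_ex_sin; auto | auto].
  rewrite (Dcos (fun t => th t u0)), (Dsin (fun t => th t u0)) by auto.
  rewrite <- (Nt_eq _ _ _ _ G0), <- (Bt_eq _ _ _ _ G0).
  assert (Fa : dot (Dv (Nt gam u0) t0) (Nor gam t0 u0) = 0).
  { assert (X := const_dot_loc _ _ t0 1 EN EN).
    rewrite <- (Nt_eq _ _ _ _ G0) in X. rewrite (dot_comm (Nor gam t0 u0)) in X.
    assert (dot (Dv (Nt gam u0) t0) (Nor gam t0 u0) + dot (Dv (Nt gam u0) t0) (Nor gam t0 u0) = 0).
    { apply X. apply (filter_imp (fun t => 0 < t /\ Rbar_lt t tbar)); [|exact L]. intros t [h1 h2].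
      rewrite <- (Nt_eq _ _ _ _ (Gt t h1 h2)). apply (NN _ _ _ _ (Gt t h1 h2)). }
    lra. }
  assert (Fb : dot (Dv (Bt gam u0) t0) (Bin gam t0 u0) = 0).
  { assert (X := const_dot_loc _ _ t0 1 EB EB).
    rewrite <- (Bt_eq _ _ _ _ G0) in X. rewrite (dot_comm (Bin gam t0 u0)) in X.
    assert (dot (Dv (Bt gam u0) t0) (Bin gam t0 u0) + dot (Dv (Bt gam u0) t0) (Bin gam t0 u0) = 0).
    { apply X. apply (filter_imp (fun t => 0 < t /\ Rbar_lt t tbar)); [|exact L]. intros t [h1 h2].
      rewrite <- (Bt_eq _ _ _ _ (Gt t h1 h2)). apply (BB _ _ _ _ (Gt t h1 h2)). }
    lra. }
  assert (Fc : dot (Dv (Bt gam u0) t0) (Nor gam t0 u0) = - dot (Dv (Nt gam u0) t0) (Bin gam t0 u0)).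
  { unfold Bt at 1. rewrite Dv_cross by auto. rewrite dot_addl.
    rewrite <- (Nt_eq _ _ _ _ G0), <- Tt_eq. rewrite dot_cross_r, triple. fold (Bin gam t0 u0). ring. }
  assert (D1 : Dv (G1t gam u0) t0 = Dv (Vf gam th t0) u0).
  { apply (G1dt tbar); auto; intro u; apply Hf; auto. }
  assert (D2 : Dv (G2t gam u0) t0 = Dv (Dv (Vf gam th t0)) u0).
  { apply (G2dt tbar); auto; intro u; apply Hf; auto. }
  assert (Fd : dot (Dv (Nt gam u0) t0) (Bin gam t0 u0) =
     / kappa gam t0 u0 * (c1f (Dv (gam t0) u0) (Dv (Dv (gam t0)) u0) * dot (Dv (Vf gam th t0) u0) (Bin gam t0 u0)
                        + c2f (Dv (gam t0) u0) * dot (Dv (Dv (Vf gam th t0)) u0) (Bin gam t0 u0))).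
  { unfold Nt at 1.
    rewrite (Dv_vscal (fun t => / kt gam u0 t) (Kt gam u0) t0); auto.
    2: { apply ex_derive_inv; auto. apply Rgt_not_eq, (kt_pos _ _ _ _ G0). }
    rewrite dot_addl, !dot_scall, (Kt0 _ _ _ _ G0), dot_scall, NB, <- (kt_eq _ _ _ _ G0).
    unfold Kt at 1, Kf.
    rewrite Dv_vadd.
    2: apply exV_vscal; auto; apply (ex_c1 _ _ _ _ G0 E1 E2).
    2: apply exV_vscal; auto; apply (ex_c2 _ _ _ _ G0 E1).
    rewrite (Dv_vscal (fun t => - dot (G1t gam u0 t) (G2t gam u0 t) *
     (/ dot (G1t gam u0 t) (G1t gam u0 t) * / dot (G1t gam u0 t) (G1t gam u0 t))) (G1t gam u0) t0); auto.
    2: apply (ex_c1 _ _ _ _ G0 E1 E2).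
    rewrite (Dv_vscal (fun t => / dot (G1t gam u0 t) (G1t gam u0 t)) (G2t gam u0) t0); auto.
    2: apply (ex_c2 _ _ _ _ G0 E1).
    rewrite D1, D2.
    rewrite !dot_addl, !dot_scall.
    unfold G1t, G2t. rewrite (G1B _ _ _ _ G0), (G2B _ _ _ _ G0).
    unfold c1f, c2f. ring. }
  rewrite (beta_eq _ _ _ _ G0).
  repeat (rewrite dot_addl || rewrite dot_scall || rewrite dot_addr || rewrite dot_scalr).
  rewrite Fa, Fb, Fc, (NN _ _ _ _ G0), (BB _ _ _ _ G0), NB, (dot_comm (Bin gam t0 u0) (Nor gam t0 u0)), NB.
  rewrite <- Fd.
  assert (sc := sin2_cos2 (th t0 u0)). unfold Rsqr in sc.
  set (X := dot (Dv (Nt gam u0) t0) (Bin gam t0 u0)).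
  set (Y := Derive (fun t => th t u0) t0).
  replace (Derive (fun t' : R => th t' u0) t0) with Y by reflexivity.
  replace (Y + X) with ((sin (th t0 u0) * sin (th t0 u0) + cos (th t0 u0) * cos (th t0 u0)) * (Y + X)) by (rewrite sc; ring).
  ring.
Qed.


Lemma DW1g (k k1 th th1 g tau : R -> R) x :
  ex_derive k x -> ex_derive k1 x -> ex_derive th x -> ex_derive th1 x -> ex_derive g x -> ex_derive tau x ->
  Derive (fun y => k1 y * sin (th y) + k y * cos (th y) * th1 y + k y * cos (th y) * g y * tau y) x =
  Derive k1 x * sin (th x) + k1 x * (cos (th x) * Derive th x)
  + (Derive k x * cos (th x) + k x * (- sin (th x) * Derive th x)) * th1 x + k x * cos (th x) * Derive th1 x
  + (Derive k x * cos (th x) + k x * (- sin (th x) * Derive th x)) * g x * tau x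
  + k x * cos (th x) * (Derive g x * tau x + g x * Derive tau x).
Proof. intros. erewrite is_derive_unique; [|auto_derive; tauto]. eta_D. ring. Qed.

Lemma Dinvmul (g h : R -> R) x : ex_derive g x -> ex_derive h x -> g x <> 0 ->
  Derive (fun y => / g y * h y) x = - Derive g x / g x ^ 2 * h x + / g x * Derive h x.
Proof. intros. erewrite is_derive_unique; [|auto_derive; tauto]. eta_D. field. auto. Qed.

Lemma Dpsi3g (tau g h : R -> R) x : ex_derive tau x -> ex_derive g x -> ex_derive h x -> g x <> 0 ->
  Derive (fun y => tau y + / g y * h y) x = Derive tau x + (- Derive g x / g x ^ 2 * h x + / g x * Derive h x).
Proof. intros. erewrite is_derive_unique; [|auto_derive; tauto]. eta_D. field. auto. Qed.

Theorem mainTheorem16 (H : R) (tbar : Rbar)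
    (gam : R -> R -> V3) (th : R -> R -> R) :
  smoothV_on (fun t _ => 0 < t /\ Rbar_lt t tbar) gam ->
  smooth_on (fun t _ => 0 < t /\ Rbar_lt t tbar) th ->
  (forall t u, gam t (u + 2 * PI) = gam t u) ->
  (forall t u, 0 < t -> Rbar_lt t tbar -> 0 < gmet gam t u) ->
  (forall t u, 0 < t -> Rbar_lt t tbar -> 0 < kappa gam t u) ->
  (forall t u, 0 < t -> Rbar_lt t tbar ->
     Dv (fun t' => gam t' u) t = vscal (kappa gam t u) (nu gam th t u)) ->
  (forall t u, 0 < t -> Rbar_lt t tbar ->
     Derive (fun t' => th t' u) t = upsilon gam th t H u) ->
  forall t u, 0 < t -> Rbar_lt t tbar -> mean_curv gam th t u = H.
Proof.
  intros S Sth _ Hg Hk Hf Hup t u H1 H2.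
  change (fun t _ => 0 < t /\ Rbar_lt t tbar) with (slab tbar) in S, Sth.
  assert (G : Good gam th t) by (apply (Good_slab tbar); auto).
  pose proof G as [G1 [G2 [G3 G4]]].
  pose proof (G3 u) as g0. pose proof (G4 u) as k0.
  assert (XN := Xtt_beta tbar gam th t u S Sth Hg Hk Hf H1 H2).
  unfold mean_curv. cbv zeta.
  rewrite XN. clear XN.
  rewrite (Hf t u H1 H2), (Hup t u H1 H2).
  rewrite (G2F _ _ _ _ G), (G1T _ _ _ _ G).
  unfold c1f, c2f. rewrite <- (G1T _ _ _ _ G), <- (G2F _ _ _ _ G), (G1G1 _ _ _ _ G), (G1G2 _ _ _ _ G).
  rewrite (DDV_B _ _ _ _ G), (DV_B _ _ _ _ G), (DV_N _ _ _ _ G).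
  rewrite (G1T _ _ _ _ G), (G2F _ _ _ _ G).
  rewrite !dot_scall, !dot_scalr, dot_addl, !dot_scall, (Tbeta _ _ _ _ G), (Nbeta _ _ _ _ G).
  rewrite (nuT _ _ _ _ G), (nunu _ _ _ _ G).
  assert (Ek : ex_derive (kappa gam t) u) by apply Sm_ex, (Sm_kappa _ _ _ G).
  assert (Ek1 : ex_derive (Derive (kappa gam t)) u) by apply Sm_ex, Sm_D, (Sm_kappa _ _ _ G).
  assert (Et : ex_derive (th t) u) by apply Sm_ex, G2.
  assert (Et1 : ex_derive (Derive (th t)) u) by apply Sm_ex, Sm_D, G2.
  assert (Eg : ex_derive (gmet gam t) u) by apply Sm_ex, (Sm_gmet _ _ _ G).
  assert (Eta : ex_derive (tors gam t) u) by apply Sm_ex, (Sm_tors _ _ _ G).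
  unfold W1. rewrite (DW1g (kappa gam t) (Derive (kappa gam t)) (th t) (Derive (th t)) (gmet gam t) (tors gam t) u); auto.
  unfold upsilon, psi1, psi2, psi3, dsS.
  rewrite (Dpsi3g (tors gam t) (gmet gam t) (Derive (th t)) u); auto; [| apply Rgt_not_eq; auto].
  rewrite (Dinvmul (gmet gam t) (Derive (kappa gam t)) u); auto; [| apply Rgt_not_eq; auto].
  field. split; apply Rgt_not_eq; auto.
Qed.
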